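(* Let $X$ be a compact metric space, $G$ a countable infinite discrete amenable group acting continuously on $X$, and suppose $(X,G)$ has the $g$-almost product property with associated map $m$. Let $x_1,\dots,x_k\in X$, $\varepsilon_1,\dots,\varepsilon_k\in(0,1)$, and pairwise disjoint $F_1,\dots,F_k\in F(G)$ with each $F_j$ being $m(\varepsilon_j)$-invariant. Let $F=\bigcup_{j=1}^kF_j$. Suppose $\mu_1,\dots,\mu_k\in M(X)$ and $\xi_1,\dots,\xi_k>0$ satisfy $\mathcal E_{F_j}(x_j)\in B(\mu_j,\xi_j)$ for $j=1,\dots,k$. Then for every $y\in\bigcap_{j=1}^kB(g;F_j,x_j,\varepsilon_j)$ and every probability measure $\alpha\in M(X)$, \[ D(\mathcal E_F(y),\alpha)\le\sum_{j=1}^k\frac{|F_j|}{|F|}\big(D(\mu_j,\alpha)+\xi_j+\varepsilon_j+g(\varepsilon_j)\big). \]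
   Context: $M(X)$ is the space of Borel probability measures on $X$. $F(G)$ denotes finite subsets of $G$; for $K,F\in F(G)$, $\partial_K(F)=\{c\in G: Kc\cap F\ne\emptyset,\ Kc\cap(G\setminus F)\ne\emptyset\}$ and $F$ is $(K,\delta)$-invariant if $|\partial_K(F)|/|F|<\delta$; ''$m(\varepsilon)$-invariant'' means $(K,\delta)$-invariant where $m(\varepsilon)=(K,\delta)$. Fix a countable separating family $\{\varphi_i\}$ of continuous functions with $0\le\varphi_i\le1$; $D(\mu,\nu)=\sum_i2^{-i}|\int\varphi_id\mu-\int\varphi_id\nu|$; $B(\mu,\xi)=\{\nu\in M(X):D(\mu,\nu)<\xi\}$; the metric on $X$ is $\rho(x,y)=D(\delta_x,\delta_y)$. $\mathcal E_F(x)=\frac1{|F|}\sum_{s\in F}\delta_{sx}$. $g$-almost product property: $g:(0,1)\to(0,1)$ nondecreasing with $\lim_{r\to0}g(r)=0$; $B(g;F,x,\varepsilon)=\{y: |\{s\in F:\rho(sx,sy)>\varepsilon\}|\le g(\varepsilon)|F|\}$; the property holds with map $m:(0,1)\to F(G)\times(0,1)$ if for all $k$, $\varepsilon_i$, $x_i$ and pairwise disjoint $F_i\in F(G)$ with $F_i$ being $m(\varepsilon_i)$-invariant, $\bigcap_iB(g;F_i,x_i,\varepsilon_i)\ne\emptyset$. *)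

(* Defs.v *)
From HB Require Import structures.
From mathcomp Require Import all_boot all_order all_algebra.
From mathcomp Require Import finmap.
From mathcomp Require Import all_classical all_reals all_analysis.

Set Implicit Arguments.
Unset Strict Implicit.
Unset Printing Implicit Defensive.

Import Order.TTheory GRing.Theory Num.Theory.
Import numFieldNormedType.Exports.

Local Open Scope classical_set_scope.
Local Open Scope ring_scope.

Definition is_group {G : Type} (mul : G -> G -> G) (e : G) (inv : G -> G) :=
  [/\ forall a b c, mul a (mul b c) = mul (mul a b) c,
      forall a, mul e a = a,
      forall a, mul a e = a,
      forall a, mul (inv a) a = e &
      forall a, mul a (inv a) = e].

Definition is_cont_action {G : Type} {X : topologicalType}
  (mul : G -> G -> G) (e : G) (act : G -> X -> X) :=
  [/\ forall x, act e x = x,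
      forall g h x, act (mul g h) x = act g (act h x) &
      forall g, continuous (act g)].

(* boundary  d_K(F) = { c in G : Kc meets F and Kc meets G \ F }.
   Every such c is of the form k^-1 f (k in K, f in F), so we may
   enumerate it inside the finite set { k^-1 f }. *)
Definition fbd {G : choiceType} (mul : G -> G -> G) (inv : G -> G)
  (K F : {fset G}) : {fset G} :=
  [fset c in ((fun k f => mul (inv k) f) @2` (K, fun _ => F))%fset |
     [exists k : K, mul (val k) c \in F] &&
     [exists k : K, mul (val k) c \notin F]]%fset.

(* F is (K, delta)-invariant: |d_K(F)| / |F| < delta  (F nonempty so that
   the ratio makes sense) *)
Definition finvariant {R : realType} {G : choiceType} (mul : G -> G -> G)
  (inv : G -> G) (K : {fset G}) (delta : R) (F : {fset G}) : Prop :=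
  F != fset0 /\
  (#|` fbd mul inv K F|%:R / #|` F|%:R < delta).

Definition amenable {R : realType} {G : choiceType} (mul : G -> G -> G)
  (inv : G -> G) : Prop :=
  forall (K : {fset G}) (delta : R), 0 < delta ->
    exists F : {fset G}, finvariant mul inv K delta F.

Definition borelT (X : ptopologicalType) := g_sigma_algebraType (@open X).

(* D(mu, nu) = sum_{i >= 1} 2^-i |int phi_i dmu - int phi_i dnu|,
   written with index i : nat, i >= 0, weight 2^-(i+1) *)
Definition Dm {R : realType} {X : ptopologicalType} (phi : nat -> X -> R)
  (mu nu : {measure set (borelT X) -> \bar R}) : R :=
  limn (fun n => \sum_(i < n) ((2%:R ^- i.+1) *
     `| fine (\int[mu]_x (phi i x)%:E)
        - fine (\int[nu]_x (phi i x)%:E) |)).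

Definition rho {R : realType} {X : ptopologicalType} (phi : nat -> X -> R)
  (x y : X) : R :=
  Dm phi (@dirac _ (borelT X) x R) (@dirac _ (borelT X) y R).

(* empirical measure  E_F(x) = 1/|F| sum_{s in F} delta_{sx} *)
Definition inv_card_nng {R : realType} {G : choiceType} (F : {fset G})
  : {nonneg R} := (#|` F|%:R^-1)%:nng.

Definition empir {R : realType} {X : ptopologicalType} {G : choiceType}
  (e : G) (act : G -> X -> X) (F : {fset G}) (x : X)
  : {measure set (borelT X) -> \bar R} :=
  mscale (@inv_card_nng R G F)
    (msum (fun n => @dirac _ (borelT X) (act (nth e F n) x) R) #|` F|).

Definition Bg {R : realType} {X : ptopologicalType} {G : choiceType}
  (phi : nat -> X -> R) (act : G -> X -> X) (g : R -> R)
  (F : {fset G}) (x : X) (eps : R) : set X :=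
  [set y | (#|` [fset s in F | eps < rho phi (act s x) (act s y)]%fset|%:R
            <= g eps * #|` F|%:R)].

Definition almost_product {R : realType} {X : ptopologicalType} {G : choiceType}
  (mul : G -> G -> G) (inv : G -> G) (phi : nat -> X -> R)
  (act : G -> X -> X) (g : R -> R) (m : R -> {fset G} * R) : Prop :=
  (forall r, 0 < r < 1 -> 0 < g r < 1) /\
  {in `]0, 1[ &, {homo g : r s / r <= s}} /\
  (g r @[r --> 0^'+] --> 0) /\
  (forall r, 0 < r < 1 -> 0 < (m r).2 < 1) /\
  (forall (n : nat) (eps : 'I_n -> R) (x : 'I_n -> X) (F : 'I_n -> {fset G}),
     (forall i, 0 < eps i < 1) ->
     (forall i j, i != j -> [disjoint F i & F j]%fset) ->
     (forall i, finvariant mul inv (m (eps i)).1 (m (eps i)).2 (F i)) ->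
     exists y, forall i, Bg phi act g (F i) (x i) (eps i) y).

(* Main.v *)
Require Import Defs.
From HB Require Import structures.
From mathcomp Require Import all_boot all_order all_algebra.
From mathcomp Require Import finmap.
From mathcomp Require Import all_classical all_reals all_analysis.
From mathcomp Require Import measurable_realfun.
From mathcomp Require Import lra.
Import Order.TTheory GRing.Theory Num.Theory.
Import numFieldNormedType.Exports.
Local Open Scope classical_set_scope.
Local Open Scope ring_scope.
Set Implicit Arguments. Unset Strict Implicit.


Section Ser.
Variable R : realType.
Definition ps (d : nat -> R) n := \sum_(i < n) ((2%:R ^- i.+1) * d i).

Lemma geo_sum n : \sum_(i < n) (2%:R ^- i.+1 : R) = 1 - 2%:R ^- n.
Proof.
elim: n => [|n IH]; first by rewrite big_ord0 expr0 invr1 subrr.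
rewrite big_ord_recr /= IH -addrA; congr (_ + _).
rewrite exprS invfM; set t := (2%:R ^+ n)^-1. lra.
Qed.

Variable d : nat -> R.
Hypothesis d01 : forall i, 0 <= d i <= 1.

Lemma ps_nd : nondecreasing_seq (ps d).
Proof.
apply/nondecreasing_seqP => n; rewrite /ps big_ord_recr /= lerDl.
by have /andP[h _] := d01 n; rewrite mulr_ge0 // invr_ge0 exprn_ge0.
Qed.

Lemma ps_le1 n : ps d n <= 1.
Proof.
apply: (@le_trans _ _ (\sum_(i < n) (2%:R ^- i.+1 : R))).
  apply: ler_sum => i _; have /andP[h1 h2] := d01 i.
  by rewrite ler_piMr // invr_ge0 exprn_ge0.
by rewrite geo_sum lerBlDr lerDl invr_ge0 exprn_ge0.
Qed.

Lemma ps_cvg : cvgn (ps d).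
Proof.
apply: nondecreasing_is_cvgn; first exact: ps_nd.
by exists 1 => _ [n _ <-]; exact: ps_le1.
Qed.

Lemma ps_le_lim n : ps d n <= limn (ps d).
Proof. exact: (nondecreasing_cvgn_le ps_nd ps_cvg). Qed.

Lemma lim_ps_le L : (forall n, ps d n <= L) -> limn (ps d) <= L.
Proof. move=> h; apply: limr_le; first exact: ps_cvg. by apply: nearW. Qed.

End Ser.
Lemma mphi (R : realType) (X : ptopologicalType) (f : X -> R) :
  continuous f -> measurable_fun (setT : set (borelT X)) f.
Proof.
move=> /continuousP cf; apply: (measurability _ (measurable_realfun.RGenOpens.measurableE R)).
move=> _ [_ [a [b ->] <-]]. rewrite setTI. apply: sub_sigma_algebra. apply: cf. exact: interval_open.
Qed.

Definition cf (R : realType) (X : ptopologicalType) (f : X -> R)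
  (nu : {measure set (borelT X) -> \bar R}) : R := fine (\int[nu]_x (f x)%:E).

Lemma cf_dirac (R : realType) (X : ptopologicalType) (f : X -> R) z :
  continuous f -> cf f (@dirac _ (borelT X) z R) = f z.
Proof.
move=> cfc; rewrite /cf integral_dirac //; last by apply/measurable_EFinP; exact: mphi.
by rewrite diracT mul1e.
Qed.

Lemma cf_empir (R : realType) (X : ptopologicalType) (G : choiceType) (e : G)
  (act : G -> X -> X) (F : {fset G}) (z : X) (f : X -> R) :
  continuous f -> (forall x, 0 <= f x) ->
  cf f (empir e act F z) = #|` F|%:R^-1 * \sum_(s <- F) f (act s z).
Proof.
move=> cfc f0; rewrite /cf /empir.
have mf : measurable_fun (setT : set (borelT X)) (fun x => (f x)%:E).
  by apply/measurable_EFinP; exact: mphi.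
rewrite ge0_integral_mscale //; last by move=> x _; rewrite lee_fin.
rewrite ge0_integral_measure_sum //; last by move=> x _; rewrite lee_fin.
under eq_bigr do rewrite integral_dirac // diracT mul1e.
rewrite sumEFin /=; congr (_ * _).
by rewrite (big_nth e) big_mkord.
Qed.

Lemma cf_prob (R : realType) (X : ptopologicalType) (f : X -> R)
  (P : probability (borelT X) R) :
  continuous f -> (forall x, 0 <= f x <= 1) -> 0 <= cf f P <= 1.
Proof.
move=> cfc f01.
have mf : measurable_fun (setT : set (borelT X)) (fun x => (f x)%:E).
  by apply/measurable_EFinP; exact: mphi.
have h0 : (0 <= \int[P]_x (f x)%:E)%E.
  by apply: integral_ge0 => x _; rewrite lee_fin; case/andP: (f01 x).
have h1 : (\int[P]_x (f x)%:E <= 1)%E.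
  have h2 : (\int[P]_x (f x)%:E <= \int[P]_x (cst 1%E) x)%E.
    apply: ge0_le_integral => //.
    - by move=> x _; rewrite lee_fin; case/andP: (f01 x).
    - by move=> x _; rewrite /= lee_fin; case/andP: (f01 x).
  rewrite integral_cst // mul1e in h2. apply: (le_trans h2). exact: probability_le1.
rewrite /cf; move: h0 h1; case: (\int[P]_x (f x)%:E)%E => [r| |] //=.
by rewrite !lee_fin => -> ->.
Qed.

Lemma sum_bigcup (R : nmodType) (G : choiceType) k (Fs : 'I_k -> {fset G}) (f : G -> R) :
  (forall i j, i != j -> [disjoint Fs i & Fs j]%fset) ->
  \sum_(s <- (\bigcup_(j | true) Fs j)%fset) f s = \sum_(j < k) \sum_(s <- Fs j) f s.
Proof.
move=> Hd; set F := (\bigcup_(j | true) Fs j)%fset.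
transitivity (\sum_(s <- F) \sum_(j < k) (if s \in Fs j then f s else 0)).
  rewrite big_seq [RHS]big_seq; apply: eq_bigr => s sF.
  have [j0 _ sj0] := bigfcupP _ _ _ _ sF.
  rewrite (bigD1 j0) //= sj0 big1 ?addr0 // => j jj0.
  have : [disjoint Fs j0 & Fs j]%fset by apply: Hd; rewrite eq_sym.
  by move/fdisjointP/(_ s sj0) => /negbTE ->.
rewrite exchange_big /=; apply: eq_bigr => j _.
rewrite -(big_fset_incl _ (A := Fs j)).
- by rewrite big_seq [RHS]big_seq; apply: eq_bigr => s ->.
- by apply/fsubsetP => s sj; apply/bigfcupP; exists j; rewrite ?mem_index_enum.
- by move=> s _ /negbTE ->.
Qed.

Lemma card_real (G : choiceType) (R : realType) (A : {fset G}) :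
  \sum_(s <- A) (1 : R) = #|` A|%:R.
Proof. by rewrite -sum1_size natr_sum. Qed.

Lemma abs01 (R : realType) (a b : R) : 0 <= a <= 1 -> 0 <= b <= 1 -> 0 <= `|a - b| <= 1.
Proof.
move=> /andP[a0 a1] /andP[b0 b1]; rewrite normr_ge0 /= ler_norml; apply/andP; split; lra.
Qed.

Lemma tri3 (R : realType) (a b c d : R) :
  `|a - d| <= `|a - b| + `|c - b| + `|c - d|.
Proof.
have -> : a - d = (a - b) + (b - c) + (c - d) by lra.
rewrite (distrC c b).
apply: (le_trans (ler_normD _ _)); rewrite lerD2r; exact: ler_normD.
Qed.

Lemma Dm_ps (R : realType) (X : ptopologicalType) (phi : nat -> X -> R) mu nu :
  Dm phi mu nu = limn (ps (fun i => `|cf (phi i) mu - cf (phi i) nu|)).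
Proof. by []. Qed.

Lemma cf_empir01 (R : realType) (X : ptopologicalType) (G : choiceType) (e : G)
  (act : G -> X -> X) (F : {fset G}) (z : X) (f : X -> R) :
  continuous f -> (forall x, 0 <= f x <= 1) -> F != fset0 ->
  0 <= cf f (empir e act F z) <= 1.
Proof.
move=> cfc f01 Fn.
have cp : 0 < #|` F|%:R :> R by rewrite ltr0n cardfs_gt0.
rewrite cf_empir //; last by move=> x; case/andP: (f01 x).
apply/andP; split.
  apply: mulr_ge0; first by rewrite invr_ge0 ltW.
  by apply: sumr_ge0 => s _; case/andP: (f01 (act s z)).
apply: (@le_trans _ _ (#|` F|%:R^-1 * #|` F|%:R)); last by rewrite mulVf ?lt0r_neq0.
rewrite ler_wpM2l ?invr_ge0 ?(ltW cp) // -card_real.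
by apply: ler_sum => s _; case/andP: (f01 (act s z)).
Qed.

Lemma rho_sum_bound (R : realType) (G : choiceType) (A : {fset G}) (r : G -> R) (eps gg : R) :
  0 <= eps -> (forall s, r s <= 1) ->
  #|` [fset s in A | eps < r s]%fset|%:R <= gg * #|` A|%:R ->
  \sum_(s <- A) r s <= #|` A|%:R * (eps + gg).
Proof.
move=> e0 r1 hb.
set B := [fset s in A | eps < r s]%fset.
apply: (@le_trans _ _ (\sum_(s <- A) ((if eps < r s then 1 else 0) + eps))).
  apply: ler_sum => s _; case: ifP => h; first by rewrite (le_trans (r1 s)) // lerDl.
  by rewrite add0r; move/negbT: h; rewrite -leNgt.
rewrite big_split /=.
have -> : \sum_(s <- A) eps = #|` A|%:R * eps.
  by rewrite -card_real big_distrl /=; apply: eq_bigr => s _; rewrite mul1r.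
have -> : \sum_(s <- A) (if eps < r s then 1 else 0) = #|` B|%:R :> R.
  rewrite -card_real -(big_fset_incl _ (A := B)).
  - by rewrite big_seq [RHS]big_seq; apply: eq_bigr => s; rewrite !inE => /andP[_ ->].
  - by apply/fsubsetP => s; rewrite !inE => /andP[].
  - by move=> s sA; rewrite !inE sA /= => /negbTE ->.
rewrite mulrDr addrC lerD2l. by rewrite mulrC.
Qed.
Unset Implicit Arguments.
Unset Strict Implicit.

Theorem mainTheorem3
  (R : realType) (X : ptopologicalType) (G : countType)
  (mul : G -> G -> G) (e : G) (inv : G -> G) (act : G -> X -> X)
  (phi : nat -> X -> R) (g : R -> R) (m : R -> {fset G} * R)
  (HG : is_group mul e inv)
  (HGinf : ~ finite_set [set: G])
  (HGam : amenable (R := R) mul inv)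
  (Hact : is_cont_action mul e act)
  (HXc : compact [set: X]) (HXh : hausdorff_space X)
  (Hphic : forall i, continuous (phi i))
  (Hphi01 : forall i x, 0 <= phi i x <= 1)
  (Hphisep : forall x y : X, x <> y -> exists i, phi i x <> phi i y)
  (Hap : almost_product mul inv phi act g m)
  (k : nat) (Hk : (0 < k)%N)
  (x : 'I_k -> X) (eps : 'I_k -> R) (Fs : 'I_k -> {fset G})
  (mu : 'I_k -> probability (borelT X) R) (xi : 'I_k -> R)
  (Heps : forall j, 0 < eps j < 1)
  (Hdisj : forall i j, i != j -> [disjoint Fs i & Fs j]%fset)
  (Hinv : forall j, finvariant mul inv (m (eps j)).1 (m (eps j)).2 (Fs j))
  (Hxi : forall j, 0 < xi j)
  (Hball : forall j, Dm phi (mu j) (empir e act (Fs j) (x j)) < xi j)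
  (y : X) (Hy : forall j, Bg phi act g (Fs j) (x j) (eps j) y)
  (alpha : probability (borelT X) R) :
  let F := (\bigcup_(j | true) Fs j)%fset in
  Dm phi (empir e act F y) alpha <=
    \sum_(j < k) (#|` Fs j|%:R / #|` F|%:R) *
       (Dm phi (mu j) alpha + xi j + eps j + g (eps j)).
Proof.
cbv zeta; set F := (\bigcup_(j | true) Fs j)%fset.
have Fne j : Fs j != fset0 by case: (Hinv j).
have cpos j : 0 < #|` Fs j|%:R :> R by rewrite ltr0n cardfs_gt0.
have cardF : #|` F|%:R = \sum_(j < k) #|` Fs j|%:R :> R.
  by rewrite -card_real sum_bigcup //; apply: eq_bigr => j _; rewrite card_real.
have Fpos : 0 < #|` F|%:R :> R.
  rewrite cardF (bigD1 (Ordinal Hk)) //=; apply: (lt_le_trans (cpos (Ordinal Hk))).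
  by rewrite lerDl sumr_ge0 // => j _; rewrite ler0n.
have Fne0 : F != fset0 by rewrite -cardfs_gt0 -(ltr0n R).
pose w := fun j => #|` Fs j|%:R / #|` F|%:R : R.
have w0 j : 0 <= w j by rewrite /w divr_ge0 ?ler0n.
have wsum : \sum_(j < k) w j = 1.
  by rewrite /w -big_distrl /= -cardF mulfV // lt0r_neq0.
pose T1 := fun j i => #|` Fs j|%:R^-1 * \sum_(s <- Fs j) `|phi i (act s (x j)) - phi i (act s y)|.
pose T2 := fun j i => `|cf (phi i) (mu j) - cf (phi i) (empir e act (Fs j) (x j))|.
pose T3 := fun j i => `|cf (phi i) (mu j) - cf (phi i) alpha|.
have phi0 i z : 0 <= phi i z by case/andP: (Hphi01 i z).
have hi i : `|cf (phi i) (empir e act F y) - cf (phi i) alpha| <=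
    \sum_(j < k) w j * (T1 j i + T2 j i + T3 j i).
  have e1 : cf (phi i) (empir e act F y) = \sum_(j < k) w j * cf (phi i) (empir e act (Fs j) y).
    rewrite cf_empir // sum_bigcup // big_distrr /=; apply: eq_bigr => j _.
    rewrite cf_empir // /w [RHS]mulrCA !mulrA mulVf ?mul1r //.
    exact: lt0r_neq0.
  have e2 : cf (phi i) alpha = \sum_(j < k) w j * cf (phi i) alpha.
    by rewrite -big_distrl /= wsum mul1r.
  rewrite e1 e2 -sumrB; apply: (le_trans (ler_norm_sum _ _ _)); apply: ler_sum => j _.
  rewrite -mulrBr normrM ger0_norm // ler_wpM2l //.
  apply: (le_trans (tri3 _ (cf (phi i) (empir e act (Fs j) (x j))) (cf (phi i) (mu j)) _)).
  rewrite lerD2r lerD2r /T1.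
  rewrite !cf_empir // -mulrBr normrM ger0_norm ?invr_ge0 ?ler0n // ler_wpM2l ?invr_ge0 ?ler0n //.
  rewrite -sumrB; apply: (le_trans (ler_norm_sum _ _ _)); apply: ler_sum => s _.
  by rewrite distrC.
rewrite Dm_ps; apply: lim_ps_le.
  by move=> i; apply: abs01; [apply: cf_empir01 | apply: cf_prob].
move=> n.
apply: (@le_trans _ _ (\sum_(i < n) (2%:R ^- i.+1) * \sum_(j < k) w j * (T1 j i + T2 j i + T3 j i))).
  by apply: ler_sum => i _; apply: ler_wpM2l; [rewrite invr_ge0 exprn_ge0 | exact: hi].
rewrite (_ : \sum_(i < n) _ = \sum_(j < k) w j * (ps (T1 j) n + ps (T2 j) n + ps (T3 j) n)); last first.
  rewrite /ps.
  transitivity (\sum_(i < n) \sum_(j < k) w j * ((2%:R ^- i.+1) * (T1 j i + T2 j i + T3 j i))).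
    by apply: eq_bigr => i _; rewrite big_distrr /=; apply: eq_bigr => j _; exact: mulrCA.
  rewrite exchange_big /=; apply: eq_bigr => j _; rewrite -big_distrr /= -!big_split /=.
  by congr (_ * _); apply: eq_bigr => i _; rewrite !mulrDr.
apply: ler_sum => j _; rewrite ler_wpM2l //.
have b1 : ps (T1 j) n <= eps j + g (eps j).
  have eq1 : ps (T1 j) n = #|` Fs j|%:R^-1 *
      \sum_(s <- Fs j) ps (fun i => `|phi i (act s (x j)) - phi i (act s y)|) n.
    rewrite /ps /T1.
    transitivity (\sum_(i < n) \sum_(s <- Fs j) #|` Fs j|%:R^-1 *
        (2%:R ^- i.+1 * `|phi i (act s (x j)) - phi i (act s y)|)).
      by apply: eq_bigr => i _; rewrite mulrCA big_distrr big_distrr.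
    rewrite exchange_big /= big_distrr /=; apply: eq_bigr => s _.
    by rewrite big_distrr.
  rewrite eq1.
  have hr s : ps (fun i => `|phi i (act s (x j)) - phi i (act s y)|) n <=
      rho phi (act s (x j)) (act s y).
    have -> : (fun i => `|phi i (act s (x j)) - phi i (act s y)|) =
        (fun i => `|cf (phi i) (@dirac _ (borelT X) (act s (x j)) R) -
                    cf (phi i) (@dirac _ (borelT X) (act s y) R)|).
      by apply: funext => i; rewrite !cf_dirac.
    by apply: ps_le_lim => i; rewrite !cf_dirac //; exact: abs01.
  have r1 s : rho phi (act s (x j)) (act s y) <= 1.
    rewrite /rho Dm_ps; apply: lim_ps_le => [i|nn].
      by rewrite !cf_dirac //; exact: abs01.
    by apply: ps_le1 => i; rewrite !cf_dirac //; exact: abs01.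
  have hb := Hy j; rewrite /Bg /= in hb.
  have eps0 : 0 <= eps j by case/andP: (Heps j) => /ltW.
  have hs := rho_sum_bound eps0 r1 hb.
  apply: (@le_trans _ _ (#|` Fs j|%:R^-1 * (#|` Fs j|%:R * (eps j + g (eps j))))).
    rewrite ler_wpM2l ?invr_ge0 ?ler0n //; apply: (le_trans _ hs).
    by apply: ler_sum => s _; exact: hr.
  by rewrite mulKf // lt0r_neq0.
have b2 : ps (T2 j) n <= xi j.
  apply: (le_trans _ (ltW (Hball j))); apply: ps_le_lim => i.
  by apply: abs01; [apply: cf_prob | apply: cf_empir01].
have b3 : ps (T3 j) n <= Dm phi (mu j) alpha.
  apply: ps_le_lim => i.
  by apply: abs01; apply: cf_prob.
lra.
Qed.
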